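(* The number of $1$-number-conserving $3$-state $3$-neighbor vector-valued fuzzy cellular automaton rules is $9\times 2^{18}$. More precisely, writing the local rule as $f(\bm{x},\bm{y},\bm{z})=\big(\sum a_{jk\ell}x_jy_kz_\ell,\ \sum b_{jk\ell}x_jy_kz_\ell,\ \sum c_{jk\ell}x_jy_kz_\ell\big)^{\top}$ (sums over $j,k,\ell\in\{1,2,3\}$) with $(a_{jk\ell},b_{jk\ell},c_{jk\ell})^{\top}\in\{\bm{e}_1,\bm{e}_2,\bm{e}_3\}$, the rule is $1$-number-conserving if and only if the vector $(a_{111},a_{112},a_{113},a_{121},\dots,a_{333})$ (indices in lexicographic order) is one of the following nine vectors: (1,1,1,1,1,1,1,1,1,0,0,0,0,0,0,0,0,0,0,0,0,0,0,0,0,0,0), (1,1,1,1,0,0,1,0,0,0,0,0,1,0,0,1,0,0,0,0,0,1,0,0,1,0,0), (1,1,1,1,0,0,0,0,0,0,0,0,1,0,0,0,0,0,1,1,1,1,0,0,0,0,0), (1,1,1,0,0,0,1,0,0,1,1,1,0,0,0,1,0,0,0,0,0,0,0,0,1,0,0), (1,1,1,0,0,0,0,0,0,1,1,1,0,0,0,0,0,0,1,1,1,0,0,0,0,0,0), (1,1,0,0,0,0,1,1,1,1,1,0,0,0,0,0,0,0,1,1,0,0,0,0,0,0,0), (1,0,1,1,1,1,0,0,0,1,0,1,0,0,0,0,0,0,1,0,1,0,0,0,0,0,0), (1,0,0,1,1,1,1,1,1,1,0,0,0,0,0,0,0,0,1,0,0,0,0,0,0,0,0), (1,0,0,1,0,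0,1,0,0,1,0,0,1,0,0,1,0,0,1,0,0,1,0,0,1,0,0).
   Context: Let $\bm{e}_1,\bm{e}_2,\bm{e}_3$ be the standard basis of $\mathbb{R}^3$ and $\Delta=\{(x_1,x_2,x_3)^{\top}\mid x_1+x_2+x_3=1,\ x_i\ge0\}$. A $3$-state $3$-neighbor vector-valued fuzzy cellular automaton ($3$-VFCA) has cells $i\in\mathbb{Z}$ with states $\bm{x}_i^t\in\Delta$ at times $t\in\mathbb{Z}_{\ge0}$, evolving by $\bm{x}_i^{t+1}=f(\bm{x}_{i-1}^t,\bm{x}_i^t,\bm{x}_{i+1}^t)$, where $f$ is of the displayed form (such $f$ correspond bijectively to maps $h:\{\bm{e}_1,\bm{e}_2,\bm{e}_3\}^3\to\{\bm{e}_1,\bm{e}_2,\bm{e}_3\}$ via $(a_{jk\ell},b_{jk\ell},c_{jk\ell})^\top=h(\bm{e}_j,\bm{e}_k,\bm{e}_\ell)$; there are $3^{27}$ rules). Consider $L$-periodic configurations ($\bm{x}_i^t=\bm{x}_{i+L}^t$, $L$ a positive integer) and $\nu^t(1)=\sum_{i=1}^L[\bm{x}_i^t]_1$, where $[\bm{x}]_1$ is the first entry. The rule is $1$-number-conserving if $\nu^{t+1}(1)=\nu^t(1)$ for all $t$ and every periodic initial configuration in $\Delta$ (of every period $L$). *)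

(* Defs.v *)
From HB Require Import structures.
From mathcomp Require Import all_boot all_order all_algebra.
From mathcomp Require Import boolp reals.
Set Implicit Arguments. Unset Strict Implicit. Unset Printing Implicit Defensive.
Import Order.TTheory GRing.Theory Num.Theory.
Local Open Scope ring_scope.

(* A rule is a map h : {e1,e2,e3}^3 -> {e1,e2,e3}; basis vector e_(m+1) is
   encoded by m : 'I_3, so h (j,k,l) = m means (a_jkl,b_jkl,c_jkl) = e_(m+1)
   (indices shifted by one: j,k,l : 'I_3 stand for 1,2,3). *)
Definition rule := {ffun 'I_3 * 'I_3 * 'I_3 -> 'I_3}.

Definition state (R : realType) := 'I_3 -> R.

Definition inDelta (R : realType) (x : state R) : Prop :=
  (forall m, 0 <= x m) /\ \sum_(m < 3) x m = 1.

Definition localf (R : realType) (h : rule) (x y z : state R) : state R :=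
  fun m => \sum_(j < 3) \sum_(k < 3) \sum_(l < 3)
             ((h (j, k, l) == m)%:R * x j * y k * z l).

Definition config (R : realType) := int -> state R.

Definition step (R : realType) (h : rule) (c : config R) : config R :=
  fun i => localf h (c (i - 1)) (c i) (c (i + 1)).

Definition periodic (R : realType) (L : nat) (c : config R) : Prop :=
  forall i : int, c (i + L%:Z) = c i.

Definition nu1 (R : realType) (L : nat) (c : config R) : R :=
  \sum_(1 <= i < L.+1) c (i%:Z) ord0.

Definition number_conserving1 (R : realType) (h : rule) : Prop :=
  forall (L : nat), (0 < L)%N -> forall c : config R,
    periodic L c -> (forall i, inDelta (c i)) ->
    forall t : nat, nu1 L (iter t.+1 (step h) c) = nu1 L (iter t (step h) c).

Definition triples : seq ('I_3 * 'I_3 * 'I_3) :=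
  flatten [seq flatten [seq [seq (j, k, l) | l <- enum 'I_3] | k <- enum 'I_3]
          | j <- enum 'I_3].

Definition avec (h : rule) : seq nat :=
  [seq nat_of_bool (h t == ord0) | t <- triples].

Definition conserving_avecs : seq (seq nat) :=
  [:: [:: 1;1;1;1;1;1;1;1;1;0;0;0;0;0;0;0;0;0;0;0;0;0;0;0;0;0;0];
      [:: 1;1;1;1;0;0;1;0;0;0;0;0;1;0;0;1;0;0;0;0;0;1;0;0;1;0;0];
      [:: 1;1;1;1;0;0;0;0;0;0;0;0;1;0;0;0;0;0;1;1;1;1;0;0;0;0;0];
      [:: 1;1;1;0;0;0;1;0;0;1;1;1;0;0;0;1;0;0;0;0;0;0;0;0;1;0;0];
      [:: 1;1;1;0;0;0;0;0;0;1;1;1;0;0;0;0;0;0;1;1;1;0;0;0;0;0;0];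
      [:: 1;1;0;0;0;0;1;1;1;1;1;0;0;0;0;0;0;0;1;1;0;0;0;0;0;0;0];
      [:: 1;0;1;1;1;1;0;0;0;1;0;1;0;0;0;0;0;0;1;0;1;0;0;0;0;0;0];
      [:: 1;0;0;1;1;1;1;1;1;1;0;0;0;0;0;0;0;0;1;0;0;0;0;0;0;0;0];
      [:: 1;0;0;1;0;0;1;0;0;1;0;0;1;0;0;1;0;0;1;0;0;1;0;0;1;0;0]]%N.

(* Main.v *)
Require Import Defs.
From HB Require Import structures.
From mathcomp Require Import all_boot all_order all_algebra.
From mathcomp Require Import boolp reals.
From mathcomp Require Import ring lra zify.
Set Implicit Arguments. Unset Strict Implicit. Unset Printing Implicit Defensive.
Import Order.TTheory GRing.Theory Num.Theory.

Definition T3 := ('I_3 * 'I_3 * 'I_3)%type.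
Definition o0 : 'I_3 := ord0.
Definition o1 : 'I_3 := @Ordinal 3 1 isT.
Definition o2 : 'I_3 := @Ordinal 3 2 isT.
Definition L3 : seq 'I_3 := [:: o0; o1; o2].
Definition idx (t : T3) : nat := let: (j,k,l) := t in (j * 9 + k * 3 + l)%N.

Definition triples3 : seq T3 :=
  flatten [seq flatten [seq [seq (j, k, l) | l <- L3] | k <- L3] | j <- L3].

Lemma enum3 : enum 'I_3 = L3.
Proof. by apply: (inj_map val_inj); rewrite val_enum_ord. Qed.

Lemma triplesE : triples = triples3.
Proof. by rewrite /triples enum3. Qed.

Lemma ord3_cases (P : 'I_3 -> Prop) : P o0 -> P o1 -> P o2 -> forall i, P i.
Proof.
move=> H0 H1 H2 [[|[|[|m]]] Hm] //.
- by have -> : Ordinal Hm = o0 by apply: val_inj.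
- by have -> : Ordinal Hm = o1 by apply: val_inj.
- by have -> : Ordinal Hm = o2 by apply: val_inj.
Qed.

Lemma mem_triples3 (t : T3) : t \in triples3.
Proof.
case: t => [[j k] l].
by elim/ord3_cases: j; elim/ord3_cases: k; elim/ord3_cases: l; vm_compute.
Qed.

Lemma idx_lt (t : T3) : (idx t < 27)%N.
Proof. by move: (mem_triples3 t); apply/allP: t; vm_compute. Qed.

Lemma nth_idx (t : T3) : nth (o0,o0,o0) triples3 (idx t) = t.
Proof.
apply/eqP; move: (mem_triples3 t); apply/allP: t; vm_compute. by [].
Qed.

Lemma idx_nth i : (i < 27)%N -> idx (nth (o0,o0,o0) triples3 i) = i.
Proof.
have : all (fun i => idx (nth (o0,o0,o0) triples3 i) == i) (iota 0 27) by vm_compute.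
by move=> /allP H Hi; apply/eqP/H; rewrite mem_iota.
Qed.

Lemma size_triples3 : size triples3 = 27. Proof. by []. Qed.

Definition eqn := (seq nat * nat)%type.
Definition pok (e : eqn) (p : seq bool) : bool :=
  let m := size p in
  let s := sumn [seq nat_of_bool (nth false p i) | i <- e.1 & (i < m)%N] in
  let u := count (fun i => ~~ (i < m)%N) e.1 in
  (s <= e.2)%N && (e.2 <= s + u)%N.
Definition sat (e : eqn) (v : seq bool) : bool :=
  sumn [seq nat_of_bool (nth false v i) | i <- e.1] == e.2.

Lemma split_sum (f : nat -> nat) (P : pred nat) s :
  sumn [seq f i | i <- s] = sumn [seq f i | i <- s & P i] + sumn [seq f i | i <- s & ~~ P i].
Proof. elim: s => //= x s ->; case: (P x) => /=; lia. Qed.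

Lemma bound_sum (f : nat -> nat) (P : pred nat) s : (forall i, f i <= 1) ->
  sumn [seq f i | i <- s & ~~ P i] <= count (fun i => ~~ P i) s.
Proof. move=> H; elim: s => //= x s IH; case: (P x) => //=; have := H x; lia. Qed.

Lemma sat_pok e v k : sat e v -> pok e (take k v).
Proof.
rewrite /sat /pok => /eqP <-.
set m := size (take k v).
have E : [seq nat_of_bool (nth false (take k v) i) | i <- e.1 & (i < m)%N] =
         [seq nat_of_bool (nth false v i) | i <- e.1 & (i < m)%N].
  apply/eq_in_map => i; rewrite mem_filter => /andP[Hi _].
  rewrite nth_take //; move: Hi; rewrite /m size_take; case: ifP => //; lia.
rewrite E (split_sum _ (fun i => (i < m)%N) e.1).
have := @bound_sum (fun i => nat_of_bool (nth false v i)) (fun i => (i < m)%N) e.1.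
move=> /(_ (fun i => leq_b1 (nth false v i))); lia.
Qed.

Fixpoint dfs (E : seq eqn) (n : nat) (p : seq bool) : seq (seq bool) :=
  if all (pok^~ p) E then
    match n with
    | 0 => [:: p]
    | n'.+1 => dfs E n' (rcons p false) ++ dfs E n' (rcons p true)
    end
  else [::].

Lemma dfs_complete E n : forall p s, size s = n ->
  (forall k, all (pok^~ (p ++ take k s)) E) -> p ++ s \in dfs E n p.
Proof.
elim: n => [|n IH] p s Hs Hk /=.
  have := Hk 0; rewrite take0 cats0 => ->.
  by case: s Hs Hk => // _ _; rewrite cats0 mem_seq1.
have := Hk 0; rewrite take0 cats0 => ->.
case: s Hs Hk => // b s [Hs] Hk.
rewrite -cat_rcons mem_cat.
have Hk' : forall k, all (pok^~ (rcons p b ++ take k s)) E.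
  by move=> k; rewrite cat_rcons; exact: (Hk k.+1).
case: b Hk Hk' => _ Hk'. by rewrite (IH _ _ Hs Hk') orbT. by rewrite (IH _ _ Hs Hk').
Qed.

Lemma dfs_sound E v : all (sat^~ v) E -> v \in dfs E (size v) [::].
Proof.
move=> /allP H; have := (@dfs_complete E (size v) [::] v erefl); apply.
move=> k; apply/allP => e /H He; exact: sat_pok.
Qed.

Definition Wn (w : seq 'I_3) (n : nat) : 'I_3 := nth o0 w (n %% size w).
Definition eqn_of (w : seq 'I_3) : eqn :=
  ([seq idx (Wn w i.-1, Wn w i, Wn w i.+1) | i <- iota 1 (size w)],
   sumn [seq nat_of_bool (Wn w i == o0) | i <- iota 1 (size w)]).
Fixpoint words_n n : seq (seq 'I_3) :=
  match n with 0 => [:: [::]] | n'.+1 => [seq a :: s | a <- L3, s <- words_n n'] end.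
Definition words := words_n 1 ++ words_n 2 ++ words_n 3 ++ words_n 4.
Definition EQS := map eqn_of words.
Lemma words_pos : all (fun w => 0 < size w)%N words. Proof. by vm_compute. Qed.
Lemma dfs_result : all (fun v => map nat_of_bool v \in conserving_avecs) (dfs EQS 27 [::]).
Proof. Time vm_compute. by []. Qed.

Section Reals.
Variable R : realType.
Local Open Scope ring_scope.

Lemma sum3 (F : 'I_3 -> R) : \sum_(i < 3) F i = F o0 + F o1 + F o2.
Proof.
rewrite !big_ord_recl big_ord0 addr0 addrA; congr (_ + F _ + F _); exact: val_inj.
Qed.

Lemma sum_delta (F : 'I_3 -> R) (c : 'I_3) : \sum_(l < 3) F l * (c == l)%:R = F c.
Proof.
rewrite (bigD1 c) //= eqxx mulr1 big1 ?addr0 // => l.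
by rewrite eq_sym => /negbTE ->; rewrite mulr0.
Qed.

Lemma sum_ind (a : 'I_3) : \sum_(m < 3) ((a == m)%:R : R) = 1.
Proof.
rewrite (bigD1 a) //= eqxx big1 ?addr0 // => m.
by rewrite eq_sym => /negbTE ->.
Qed.

Variable h : rule.

Lemma step_periodic L (c : config R) : periodic L c -> periodic L (step h c).
Proof.
move=> P i; rewrite /step.
have -> : i + L%:Z - 1 = (i - 1) + L%:Z by rewrite addrAC.
have -> : i + L%:Z + 1 = (i + 1) + L%:Z by rewrite addrAC.
by rewrite !P.
Qed.

Lemma localf_sum (x y z : state R) :
  \sum_(m < 3) localf h x y z m = (\sum_(j < 3) x j) * (\sum_(k < 3) y k) * (\sum_(l < 3) z l).
Proof.
rewrite /localf.
transitivity (\sum_(j < 3) \sum_(k < 3) \sum_(l < 3) x j * y k * z l).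
  rewrite exchange_big; apply: eq_bigr => j _; rewrite exchange_big.
  apply: eq_bigr => k _; rewrite exchange_big; apply: eq_bigr => l _.
  under eq_bigr do rewrite -!mulrA.
  by rewrite -big_distrl /= sum_ind mul1r !mulrA.
rewrite !sum3; ring.
Qed.

Lemma step_delta (c : config R) : (forall i, inDelta (c i)) -> forall i, inDelta (step h c i).
Proof.
move=> D i; rewrite /step; split.
  move=> m; rewrite /localf; apply: sumr_ge0 => j _; apply: sumr_ge0 => k _.
  apply: sumr_ge0 => l _.
  have [D1 _] := D (i - 1); have [D2 _] := D i; have [D3 _] := D (i + 1).
  by rewrite !mulr_ge0.
rewrite localf_sum.
have [_ ->] := D (i - 1); have [_ ->] := D i; have [_ ->] := D (i + 1).
by rewrite !mul1r.
Qed.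

Definition G (gg : 'I_3 -> 'I_3 -> R) (x y : state R) : R :=
  \sum_(j < 3) \sum_(k < 3) gg j k * x j * y k.

Lemma localf_g (gg : 'I_3 -> 'I_3 -> R)
  (hg : forall j k l, ((h (j, k, l) == ord0)%:R : R) = (k == ord0)%:R + gg j k - gg k l)
  (x y z : state R) : \sum_(j < 3) x j = 1 -> \sum_(l < 3) z l = 1 ->
  localf h x y z ord0 = y ord0 + G gg x y - G gg y z.
Proof.
move=> Hx Hz.
transitivity (y o0 * (\sum_(j < 3) x j) * (\sum_(l < 3) z l) + G gg x y * (\sum_(l < 3) z l)
   - (\sum_(j < 3) x j) * G gg y z); last by rewrite Hx Hz !mulr1 mul1r.
rewrite /localf /G !sum3 !hg.
have d0 : ((o0 == ord0)%:R : R) = 1 by rewrite eqxx.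
have d1 : ((o1 == ord0)%:R : R) = 0 by [].
rewrite d0 d1; ring.
Qed.


Lemma nu1_step_g (gg : 'I_3 -> 'I_3 -> R)
  (hg : forall j k l, ((h (j, k, l) == ord0)%:R : R) = (k == ord0)%:R + gg j k - gg k l)
  L (L0 : (0 < L)%N) (c : config R) :
  periodic L c -> (forall i, inDelta (c i)) -> nu1 L (step h c) = nu1 L c.
Proof.
move=> P D.
have Ds : forall i, \sum_(j < 3) c i j = 1 by move=> i; have [_ ->] := D i.
rewrite /nu1 /step.
under eq_bigr => i _ do rewrite (localf_g hg) ?Ds //.
rewrite sumrB big_split /=.
set H := fun n : nat => G gg (c n%:Z) (c (n.+1)%:Z).
have EA : \sum_(1 <= i < L.+1) G gg (c (i%:Z - 1)) (c i%:Z) = \sum_(0 <= i < L) H i.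
  rewrite big_add1 /=; apply: eq_bigr => i _; rewrite /H.
  by have -> : (i.+1)%:Z - 1 = i%:Z by rewrite -addn1 PoszD addrK.
have EB : \sum_(1 <= i < L.+1) G gg (c i%:Z) (c (i%:Z + 1)) = \sum_(1 <= i < L.+1) H i.
  by apply: eq_bigr => i _; rewrite /H -addn1 PoszD.
rewrite EA EB [\sum_(0 <= i < L) H i]big_ltn // [\sum_(1 <= i < L.+1) H i]big_nat_recr //=.
have -> : H L = H 0%N.
  rewrite /H; have := P 0; have := P 1; rewrite !add0r => <- <-.
  by rewrite -addn1 PoszD addrC.
by rewrite (addrC (H 0%N)) addrK.
Qed.


Lemma iter_props (c : config R) L : periodic L c -> (forall i, inDelta (c i)) ->
  forall t, periodic L (iter t (step h) c) /\ (forall i, inDelta (iter t (step h) c i)).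
Proof.
move=> P D; elim=> [|t [Pt Dt]] //=; split; [exact: step_periodic | exact: step_delta].
Qed.

Lemma nc_of_g (gg : 'I_3 -> 'I_3 -> R)
  (hg : forall j k l, ((h (j, k, l) == ord0)%:R : R) = (k == ord0)%:R + gg j k - gg k l) :
  number_conserving1 R h.
Proof.
move=> L L0 c P D t; rewrite iterS.
have [Pt Dt] := iter_props P D t.
exact: nu1_step_g.
Qed.

Lemma localf_e (a b c m : 'I_3) :
  localf h (fun m => (a == m)%:R) (fun m => (b == m)%:R) (fun m => (c == m)%:R) m
  = ((h (a, b, c) == m)%:R : R).
Proof.
rewrite /localf.
transitivity (\sum_(j < 3) \sum_(k < 3) ((h (j,k,c) == m)%:R * (a == j)%:R * (b == k)%:R : R)).
  apply: eq_bigr => j _; apply: eq_bigr => k _.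
  exact: (sum_delta (fun l => (h (j,k,l) == m)%:R * (a == j)%:R * (b == k)%:R)).
transitivity (\sum_(j < 3) ((h (j,b,c) == m)%:R * (a == j)%:R : R)).
  apply: eq_bigr => j _.
  exact: (sum_delta (fun k => (h (j,k,c) == m)%:R * (a == j)%:R)).
exact: (sum_delta (fun j => (h (j,b,c) == m)%:R)).
Qed.

Definition cw (w : seq 'I_3) : config R :=
  fun i m => ((nth o0 w `|(i %% (size w)%:Z)%Z|%N == m)%:R).

Definition vbits : seq bool := [seq h t == ord0 | t <- triples3].

Lemma nth_vbits t : nth false vbits (idx t) = (h t == ord0).
Proof. by rewrite /vbits (nth_map (o0,o0,o0)) ?nth_idx // size_triples3 idx_lt. Qed.

Lemma size_vbits : size vbits = 27%N.
Proof. by rewrite size_map. Qed.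

Lemma sumn_big (f : nat -> nat) L :
  sumn [seq f i | i <- iota 1 L] = (\sum_(1 <= i < L.+1) f i)%N.
Proof. by rewrite sumnE big_map /index_iota subn1. Qed.

Lemma nec_w (NC : number_conserving1 R h) (w : seq 'I_3) : (0 < size w)%N ->
  sat (eqn_of w) vbits.
Proof.
move=> L0.
have Pw : periodic (size w) (cw w).
  by move=> i; rewrite /cw modzDr.
have Dw : forall i, inDelta (cw w i).
  by move=> i; split; [move=> m; rewrite /cw ler0n | rewrite /cw sum_ind].
have := NC (size w) L0 (cw w) Pw Dw 0%N.
rewrite /= /nu1 /step /cw.
under eq_bigr => i _ do rewrite localf_e.
under [in RHS]eq_bigr => i _ do rewrite modz_nat /=.
rewrite -!natr_sum => /eqP; rewrite eqr_nat => /eqP E.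
rewrite /sat /eqn_of /= -map_comp !sumn_big -E.
apply/eqP; apply: eq_big_nat => i /andP[Hi _].
rewrite (nth_vbits (Wn w i.-1, Wn w i, Wn w i.+1)) /Wn.
have -> : i%:Z - 1 = (i.-1)%:Z by rewrite subzn // subn1.
have -> : i%:Z + 1 = (i.+1)%:Z by rewrite -addn1 PoszD.
by rewrite !modz_nat.
Qed.

End Reals.

Definition gtabs : seq (seq int) :=
 [:: [:: 0; 0; 0; -1; -1; -1; -1; -1; -1];
[:: 0; 0; 0; -1; 0; 0; -1; 0; 0];
[:: 0; 0; 0; -1; 0; 0; 0; 0; 0];
[:: 0; 0; 0; 0; 0; 0; -1; 0; 0];
[:: 0; 0; 0; 0; 0; 0; 0; 0; 0];
[:: 0; 0; 1; 0; 0; 0; 0; 0; 0];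
[:: 0; 1; 0; 0; 0; 0; 0; 0; 0];
[:: 0; 1; 1; 0; 0; 0; 0; 0; 0];
[:: 0; 1; 1; 0; 1; 1; 0; 1; 1]]%R.

Definition gtab (v : seq nat) := nth [::] gtabs (index v conserving_avecs).
Definition Gv (gs : seq int) (j k : 'I_3) : int := nth 0%R gs (j * 3 + k).
Definition check_g (v : seq nat) (gs : seq int) : bool :=
  all (fun t : T3 => match t with (j, k, l) =>
     (((nth 0 v (idx t) == 1) : nat)%:Z == ((k == ord0) : nat)%:Z + Gv gs j k - Gv gs k l)%R end)
   triples3.

Lemma gtab_ok : all (fun v => check_g v (gtab v)) conserving_avecs.
Proof. by vm_compute. Qed.

Lemma avecs_shape : all (fun v => (size v == 27) && all (fun x => x <= 1) v) conserving_avecs.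
Proof. by vm_compute. Qed.

Lemma avecE (h : rule) : avec h = map nat_of_bool (vbits h).
Proof. by rewrite /avec triplesE /vbits -map_comp. Qed.

Lemma bits_of_avec (h : rule) v : avec h = v ->
  forall t, (h t == ord0) = (nth 0 v (idx t) == 1).
Proof.
move=> <- t; rewrite avecE (nth_map false) ?size_vbits ?idx_lt // nth_vbits.
by case: (h t == ord0).
Qed.

Lemma avec_of_bits (h : rule) v : size v = 27 -> all (fun x => x <= 1) v ->
  (forall t, (h t == ord0) = (nth 0 v (idx t) == 1)) -> avec h = v.
Proof.
move=> Sv Av H; apply: (@eq_from_nth _ 0); first by rewrite avecE size_map size_vbits Sv.
move=> i; rewrite avecE size_map size_vbits => Hi.
rewrite (nth_map false) ?size_vbits //.
have <- := idx_nth Hi; rewrite nth_vbits H idx_nth //.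
have : nth 0 v i <= 1 by apply: (allP Av); rewrite mem_nth // Sv.
by case: (nth 0 v i) => [|[|]].
Qed.

Section R.
Variable R : realType.
Local Open Scope ring_scope.

Lemma suff_nc (h : rule) : avec h \in conserving_avecs -> number_conserving1 R h.
Proof.
move=> Hv.
have Hg := allP gtab_ok _ Hv.
have Hb := bits_of_avec (erefl (avec h)).
apply: (@nc_of_g R h (fun j k => ((Gv (gtab (avec h)) j k)%:~R : R))) => j k l.
have := allP Hg (j, k, l) (mem_triples3 _) => /= /eqP E.
rewrite Hb.
have := congr1 (fun z : int => (z%:~R : R)) E.
rewrite rmorphB rmorphD /= -!pmulrn => E'; exact: E'.
Qed.

Lemma nec_nc (h : rule) : number_conserving1 R h -> avec h \in conserving_avecs.
Proof.
move=> NC.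
have Hs : all (sat^~ (vbits h)) EQS.
  apply/allP => e /mapP [w Hw ->]; apply: (nec_w NC).
  exact: (allP words_pos w Hw).
have := dfs_sound Hs; rewrite size_vbits => Hin.
by have := allP dfs_result _ Hin; rewrite avecE.
Qed.

End R.

Lemma card_in_seq (T : finType) (U : eqType) (f : T -> U) (L : seq U) : uniq L ->
  #|[pred x | f x \in L]| = \sum_(v <- L) #|[pred x | f x == v]|.
Proof.
elim: L => [|a L IH] /=.
  by move=> _; rewrite big_nil; apply: eq_card0 => x; rewrite !inE.
move=> /andP[aL uL]; rewrite big_cons -IH //.
rewrite -(cardID [pred x | f x == a] [pred x | f x \in a :: L]).
congr (_ + _); apply: eq_card => x; rewrite !inE.
  by case: (f x == a); rewrite ?orTb ?andbT ?andbF.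
case: eqP => [->|_] /=; first by rewrite (negbTE aL).
by [].
Qed.

Lemma foldr_12 (T : Type) (P : pred T) s :
  foldr muln 1 [seq (if P x then 1 else 2) | x <- s] = 2 ^ count (predC P) s.
Proof. by elim: s => //= x s ->; case: (P x) => /=; rewrite ?mul1n // expnS. Qed.

Lemma uniq_triples3 : uniq triples3. Proof. by vm_compute. Qed.

Lemma perm_T3 : perm_eq (enum {: 'I_3 * 'I_3 * 'I_3}) triples3.
Proof.
apply: uniq_perm; [exact: enum_uniq | exact: uniq_triples3 |].
by move=> t; rewrite mem_enum mem_triples3.
Qed.

Lemma counts_ok : all (fun v => count (predC (fun x => nth 0 v (idx x) == 1)) triples3 == 18)
  conserving_avecs.
Proof. by vm_compute. Qed.

Lemma card_v (v : seq nat) : v \in conserving_avecs -> #|[pred h : rule | avec h == v]| = 2 ^ 18.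
Proof.
move=> Hv; have /andP[/eqP Sv Av] := allP avecs_shape _ Hv.
pose F := fun t : T3 => (fun a : 'I_3 => (a == ord0) == (nth 0 v (idx t) == 1)) : pred 'I_3.
have -> : #|[pred h : rule | avec h == v]| = #|(family F : simpl_pred rule)|.
  apply: eq_card => h; rewrite !inE; apply/eqP/familyP => [E t | H].
    by change (F t (h t)); rewrite /F (bits_of_avec E t) eqxx.
  apply: avec_of_bits => // t; have Ht : F t (h t) := H t; exact: (eqP Ht).
rewrite card_family /image_mem.
rewrite (eq_map (g := fun x => if nth 0 v (idx x) == 1 then 1 else 2)); last first.
  move=> x; case E: (nth 0 v (idx x) == 1).
    have -> : #|F x| = #|pred1 (ord0 : 'I_3)|.
      by apply: eq_card => a; rewrite !inE; change (F x a = (a == ord0)); rewrite /F E eqb_id.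
    by rewrite card1.
  have -> : #|F x| = #|predC1 (ord0 : 'I_3)|.
    by apply: eq_card => a; rewrite !inE; change (F x a = (a != ord0)); rewrite /F E eqbF_neg.
  by rewrite cardC1 card_ord.
rewrite foldr_12 ((permP perm_T3) _).
by have /eqP -> := allP counts_ok _ Hv.
Qed.

Theorem mainTheorem3 (R : realType) :
  (forall h : rule, number_conserving1 R h <-> avec h \in conserving_avecs) /\
  #|[pred h : rule | `[< number_conserving1 R h >]]| = (9 * 2 ^ 18)%N.
Proof.
have equiv : forall h : rule, number_conserving1 R h <-> avec h \in conserving_avecs.
  by move=> h; split; [exact: nec_nc | exact: suff_nc].
split => //.
rewrite (eq_card (B := [pred h : rule | avec h \in conserving_avecs])); last first.
  move=> h; change (`[< number_conserving1 R h >] = (avec h \in conserving_avecs)).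
  apply/idP/idP => H; [exact: (proj1 (equiv h) (asboolW H)) | apply/asboolP; exact: (proj2 (equiv h) H)].
rewrite card_in_seq; last by vm_compute.
rewrite (eq_big_seq (fun _ => 2 ^ 18)); last by move=> v /card_v.
rewrite big_const_seq iter_addn_0 mulnC.
by have -> : count predT conserving_avecs = 9 by [].
Qed.
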